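(* Let $A,B\in U(2)$ and let $G(A,B)$ be the corresponding parity-preserving two-qubit unitary. Let $M$ be the set consisting of all two-qubit matchgates together with $G(A,B)$. If $G(A,B)$ is not a matchgate, i.e. if $\det(A)\neq\det(B)$, then gates from $M$ applied only to nearest-neighbour pairs of qubits in a line of qubits form a universal set for quantum computation (in the encoded sense described in the context).
   Context: For $2\times 2$ matrices $A=(A_{ij})$ and $B=(B_{ij})$, $G(A,B)$ denotes the $4\times 4$ matrix, in the computational basis $\{|00\rangle,|01\rangle,|10\rangle,|11\rangle\}$ of two qubits, given by $$G(A,B)=\begin{pmatrix} A_{11}&0&0&A_{12}\\ 0&B_{11}&B_{12}&0\\ 0&B_{21}&B_{22}&0\\ A_{21}&0&0&A_{22}\end{pmatrix},$$ i.e. $A$ acts on the even-parity subspace spanned by $|00\rangle,|11\rangle$ and $B$ on the odd-parity subspace spanned by $|01\rangle,|10\rangle$. A parity-preserving unitary is a unitary of this form with $A,B$ unitary. A matchgate is a parity-preserving unitary $G(A,B)$ with $\det(A)=\det(B)$. Qubits are arranged on a line and a two-qubit gate is nearest-neighbour if it acts on two adjacent qubits. Universality is meant in the encoded sense: each logical qubit is encoded in two adjacent physical qubits via $|0\rangle_L=|00\rangle$, $|1\rangle_L=|11\rangle$ (logical qubits placed consecutively along the line), and the claim is that nearest-neighbour circuits of gates from $M$ implement on the logical qubits a universal gate set (arbitrary single-qubit gates together with an entangling two-qubit gate), so that any quantum computation can be efficiently simulated, with preparation and measurement in the logical computational basis done by preparation and measurement in the physical computational basis. *)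

(* Defs.v *)
(* Complex scalars: any numClosedFieldType C (e.g. R[i]). *)
From mathcomp Require Import all_boot all_order all_algebra.
From mathcomp Require Export spectral.
Set Implicit Arguments. Unset Strict Implicit. Unset Printing Implicit Defensive.
Import Order.TTheory GRing.Theory Num.Theory.
Local Open Scope ring_scope.

Section QDefs.
Variable C : numClosedFieldType.

(* G(A,B) in the basis |00>,|01>,|10>,|11> (indices 0,1,2,3) *)
Definition Gmx (A B : 'M[C]_2) : 'M[C]_4 :=
  \matrix_(i < 4, j < 4)
   match val i, val j with
   | 0%N, 0%N => A 0 0 | 0%N, 3%N => A 0 1
   | 3%N, 0%N => A 1 0 | 3%N, 3%N => A 1 1
   | 1%N, 1%N => B 0 0 | 1%N, 2%N => B 0 1
   | 2%N, 1%N => B 1 0 | 2%N, 2%N => B 1 1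
   | _, _ => 0 end.

Definition parity_preserving (g : 'M[C]_4) : Prop :=
  exists A B : 'M[C]_2, [/\ A \is unitarymx, B \is unitarymx & g = Gmx A B].

Definition matchgate (g : 'M[C]_4) : Prop :=
  exists A B : 'M[C]_2,
    [/\ A \is unitarymx, B \is unitarymx, \det A = \det B & g = Gmx A B].

(* qubit q of a register corresponds to bit q of the basis index *)
Definition bit (x q : nat) : bool := odd (x %/ 2 ^ q).

(* the gate g (4x4) applied to qubits (q, q+1) of an n-qubit register;
   qubit q is the first (most significant) tensor factor of g *)
Definition apply2 (n q : nat) (g : 'M[C]_4) : 'M[C]_(2 ^ n) :=
  \matrix_(r, c)
    if [forall p : 'I_n, (val p != q) && (val p != q.+1) ==>
                         (bit r p == bit c p)]
    then g (inord (2 * bit r q + bit r q.+1))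
           (inord (2 * bit c q + bit c q.+1))
    else 0.

Definition apply1 (n q : nat) (u : 'M[C]_2) : 'M[C]_(2 ^ n) :=
  \matrix_(r, c)
    if [forall p : 'I_n, (val p != q) ==> (bit r p == bit c p)]
    then u (inord (bit r q)) (inord (bit c q))
    else 0.

(* a nearest-neighbour circuit on n qubits: list of (position q, gate),
   gate acting on qubits (q, q+1); the first element is applied first *)
Definition circuit_mx (n : nat) (c : seq (nat * 'M[C]_4)) : 'M[C]_(2 ^ n) :=
  foldl (fun acc qg => apply2 n qg.1 qg.2 *m acc) 1%:M c.

Definition nn_circuit_in (M : 'M[C]_4 -> Prop) (n : nat)
    (c : seq (nat * 'M[C]_4)) : Prop :=
  forall qg, qg \in c -> (qg.1.+1 < n)%N /\ M qg.2.

(* encoding of k logical qubits into 2k physical qubits: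
   |0>_L = |00>, |1>_L = |11>, logical qubit j on physical qubits 2j, 2j+1 *)
Definition encmx (k : nat) : 'M[C]_(2 ^ (2 * k), 2 ^ k) :=
  \matrix_(r, l)
    if [forall j : 'I_k, (bit r (2 * j) == bit l j) &&
                         (bit r (2 * j).+1 == bit l j)]
    then 1 else 0.

(* an entangling two-qubit gate: it maps some product state to a
   non-product state (basis index 2a+b for |a b>) *)
Definition product_vec (w : 'cV[C]_4) : Prop :=
  exists u v : 'cV[C]_2,
    forall a b : 'I_2, w (inord (2 * a + b)) 0 = u a 0 * v b 0.
Definition product_of (u v : 'cV[C]_2) : 'cV[C]_4 :=
  \matrix_(i < 4, j0 < 1) (u (inord (i %/ 2)) 0 * v (inord (i %% 2)) 0).
Definition entangling (E : 'M[C]_4) : Prop :=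
  exists u v : 'cV[C]_2, ~ product_vec (E *m product_of u v).

End QDefs.

(* Main.v *)
Require Import Defs.
From mathcomp Require Import all_boot all_order all_algebra.
From mathcomp Require Import zify ring.
Import Order.TTheory GRing.Theory Num.Theory.
Local Open Scope ring_scope.
Local Open Scope sesquilinear_scope.

Lemma bit0E x : bit x 0 = odd x.
Proof. by rewrite /bit expn0 divn1. Qed.
Lemma bitSE x q : bit x q.+1 = bit x./2 q.
Proof. by rewrite /bit expnS divnMA divn2. Qed.

Fixpoint num (n : nat) (f : nat -> bool) : nat :=
  if n is n'.+1 then (f 0%N + (num n' (fun p => f p.+1)).*2)%N else 0%N.

Lemma num_lt n f : (num n f < 2 ^ n)%N.
Proof.
elim: n f => [|n IH] f //=; have := IH (fun p => f p.+1).
rewrite expnS; case: (f 0%N) => /=; lia.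
Qed.

Lemma bit_num n f q : bit (num n f) q = (q < n)%N && f q.
Proof.
elim: n f q => [|n IH] f q /=; first by rewrite /bit div0n.
case: q => [|q]; first by rewrite bit0E oddD odd_double addbF oddb.
by rewrite bitSE half_bit_double IH.
Qed.

Lemma num_ext n f g : (forall p, (p < n)%N -> f p = g p) -> num n f = num n g.
Proof.
elim: n f g => [|n IH] f g //= H.
by rewrite H // (IH (fun p => f p.+1) (fun p => g p.+1)) // => p Hp; apply: H.
Qed.

Lemma num_bit n x : (x < 2 ^ n)%N -> num n (bit x) = x.
Proof.
elim: n x => [|n IH] x /=; first by case: x.
move=> Hx; rewrite bit0E (@num_ext n _ (bit x./2)); last by move=> p _; rewrite bitSE.
rewrite IH ?odd_double_half //.
by rewrite ltn_half_double -mul2n -expnS.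
Qed.

Lemma bit_inj n (x y : 'I_(2 ^ n)) :
  (forall p, (p < n)%N -> bit x p = bit y p) -> x = y.
Proof.
move=> H; apply: val_inj => /=.
by rewrite -(@num_bit n x (ltn_ord x)) -(@num_bit n y (ltn_ord y)); apply: num_ext.
Qed.

Lemma half2 j : (2 * j)./2 = j.
Proof. by rewrite mul2n doubleK. Qed.
Lemma half2S j : (2 * j).+1./2 = j.
Proof. by rewrite mul2n -[_.+1]/(true + j.*2)%N half_bit_double. Qed.


Definition cw k (l : 'I_(2 ^ k)) : 'I_(2 ^ (2 * k)) :=
  Ordinal (num_lt (2 * k) (fun p => bit l p./2)).
Definition dec k (r : 'I_(2 ^ (2 * k))) : 'I_(2 ^ k) :=
  Ordinal (num_lt k (fun j => bit r (2 * j))).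
Definition iscw k (r : 'I_(2 ^ (2 * k))) : bool :=
  [forall j : 'I_k, bit r (2 * j) == bit r (2 * j).+1].

Lemma bit_cw k l p : (p < 2 * k)%N -> bit (cw k l) p = bit l p./2.
Proof. by move=> Hp; rewrite /cw /= bit_num Hp. Qed.
Lemma bit_dec k r j : (j < k)%N -> bit (dec k r) j = bit r (2 * j).
Proof. by move=> Hj; rewrite /dec /= bit_num Hj. Qed.

Lemma enc_cw (C : numClosedFieldType) k c l :
  encmx C k c l = (c == cw k l)%:R.
Proof.
rewrite /encmx mxE.
have -> : [forall j : 'I_k, (bit c (2 * j) == bit l j) &&
                         (bit c (2 * j).+1 == bit l j)] = (c == cw k l).
  apply/forallP/eqP.
    move=> H; apply: bit_inj => p Hp; rewrite bit_cw //.
    have Hp2 : (p./2 < k)%N by rewrite ltn_half_double -mul2n.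
    have/andP[/eqP h1 /eqP h2] := H (Ordinal Hp2).
    rewrite -[in LHS](odd_double_half p) -mul2n.
    by case: (odd p) => /=; [rewrite add1n h2 | rewrite add0n h1].
  move=> -> j; have Hj := ltn_ord j.
  by rewrite !bit_cw ?half2 ?half2S ?eqxx //; lia.
by case: eqP.
Qed.

Lemma enc_dec (C : numClosedFieldType) k r m :
  encmx C k r m = (iscw k r && (m == dec k r))%:R.
Proof.
rewrite /encmx mxE.
have -> : [forall j : 'I_k, (bit r (2 * j) == bit m j) &&
                         (bit r (2 * j).+1 == bit m j)] = iscw k r && (m == dec k r).
  apply/forallP/andP.
    move=> H; split.
      by apply/forallP => j; have/andP[/eqP a /eqP b] := H j; rewrite a b.
    apply/eqP/bit_inj => p Hp; rewrite bit_dec //.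
    by have/andP[/eqP a _] := H (Ordinal Hp); rewrite a.
  move=> [/forallP Hc /eqP ->] j; rewrite bit_dec //.
  by have /eqP <- := Hc j; rewrite !eqxx.
by case: (_ && _).
Qed.

Lemma mul_enc_r (C : numClosedFieldType) k (P : 'M[C]_(2 ^ (2 * k))) r l :
  (P *m encmx C k) r l = P r (cw k l).
Proof.
rewrite mxE (bigD1 (cw k l)) //= big1 => [|c /negbTE Hc].
  by rewrite enc_cw eqxx mulr1 addr0.
by rewrite enc_cw Hc mulr0.
Qed.

Lemma mul_enc_l (C : numClosedFieldType) k (X : 'M[C]_(2 ^ k)) r l :
  (encmx C k *m X) r l = if iscw k r then X (dec k r) l else 0.
Proof.
rewrite mxE (bigD1 (dec k r)) //= big1 => [|m /negbTE Hm].
  by rewrite enc_dec eqxx andbT addr0; case: (iscw k r); rewrite ?mul1r ?mul0r.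
by rewrite enc_dec Hm andbF mul0r.
Qed.


Lemma inord_2 (b : bool) : (inord b : 'I_2) = if b then 1 else 0.
Proof. by case: b; apply: val_inj; rewrite /= inordK. Qed.

Lemma val_inord4 m : (m < 4)%N -> \val (inord m : 'I_4) = m.
Proof. exact: inordK. Qed.

Lemma Gmx_even (C : numClosedFieldType) (A B : 'M[C]_2) (a b : bool) :
  Gmx A B (inord (2 * a + a)) (inord (2 * b + b)) = A (inord a) (inord b).
Proof.
by rewrite /Gmx mxE !inord_2 !val_inord4; case: a; case: b.
Qed.

Lemma Gmx_oddeven (C : numClosedFieldType) (A B : 'M[C]_2) (a b : bool) :
  Gmx A B (inord (2 * a + ~~ a)) (inord (2 * b + b)) = 0.
Proof.
by rewrite /Gmx mxE !val_inord4; case: a; case: b.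
Qed.


Lemma single_ok (C : numClosedFieldType) k j (U : 'M[C]_2) : (j < k)%N ->
  apply2 (2 * k) (2 * j) (Gmx U U) *m encmx C k = encmx C k *m apply1 k j U.
Proof.
move=> Hj; apply/matrixP => r l; rewrite mul_enc_r mul_enc_l /apply2 mxE /apply1 mxE.
have h1 : (2 * j < 2 * k)%N by lia.
have h2 : ((2 * j).+1 < 2 * k)%N by lia.
rewrite (@bit_cw k l _ h1) (@bit_cw k l _ h2) half2 half2S.
case Hc: (iscw k r).
  have Ha : bit r (2 * j).+1 = bit r (2 * j).
    by have /eqP := forallP Hc (Ordinal Hj).
  rewrite Ha Gmx_even bit_dec //.
  congr (if _ then _ else _).
  apply/forallP/forallP.
    move=> H [i Hik]; apply/implyP => /= Hij; rewrite bit_dec //.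
    have Hi2 : (2 * i < 2 * k)%N by lia.
    have /implyP := H (Ordinal Hi2); rewrite /= bit_cw // half2; apply.
    by apply/andP; split; apply/eqP; move/eqP: Hij; lia.
  move=> H [p Hpk]; apply/implyP => /= Hp; rewrite bit_cw //.
  have Hi : (p./2 < k)%N by rewrite ltn_half_double -mul2n.
  have E := odd_double_half p.
  move: (p./2) Hi E => i Hi E.
  have /implyP := H (Ordinal Hi); rewrite /= bit_dec // => H'.
  have Hne : i != j.
    by apply/eqP => Ej; move: Hp; rewrite -E Ej; case: (odd p) => /=; lia.
  have /eqP <- := H' Hne.
  case: (odd p) E => /= <-; rewrite -mul2n ?add0n //.
  by rewrite add1n; have /eqP /= -> := forallP Hc (Ordinal Hi).
move/negbT/forallPn: Hc => [[i Hik] /= Hi].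
case: ifP => // H.
have Eij : i = j.
  apply/eqP; apply: contraNT Hi => Hij.
  have Hi2 : (2 * i < 2 * k)%N by lia.
  have Hi3 : ((2 * i).+1 < 2 * k)%N by lia.
  have /implyP := forallP H (Ordinal Hi2); rewrite /= bit_cw // half2 => Ha.
  have /implyP := forallP H (Ordinal Hi3); rewrite /= bit_cw // half2S => Hb.
  rewrite (eqP (Ha _)) ?(eqP (Hb _)) //;
  by apply/andP; split; apply/eqP; move/eqP: Hij; lia.
move: Hi; rewrite Eij.
case: (bit r (2 * j)); case: (bit r (2 * j).+1) => //= _.
  by case: (bit l j); rewrite /Gmx mxE !val_inord4.
by case: (bit l j); rewrite /Gmx mxE !val_inord4.
Qed.


Lemma iscw_cw k l : iscw k (cw k l).
Proof.
apply/forallP => -[i Hi] /=.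
by rewrite !bit_cw ?half2 ?half2S //; lia.
Qed.

Lemma dec_cw k l : dec k (cw k l) = l.
Proof.
by apply: bit_inj => i Hi; rewrite bit_dec // bit_cw ?half2 //; lia.
Qed.

Lemma cw_dec k r : iscw k r -> cw k (dec k r) = r.
Proof.
move=> Hc; apply: bit_inj => p Hp.
have Hi : (p./2 < k)%N by rewrite ltn_half_double -mul2n.
rewrite bit_cw // bit_dec //.
have E := odd_double_half p.
move: (p./2) Hi E => i Hi E.
case: (odd p) E => /= <-; rewrite -mul2n ?add0n //.
by rewrite add1n; have /eqP /= -> := forallP Hc (Ordinal Hi).
Qed.

Lemma ifif (T : Type) (b c : bool) (x y : T) :
  (if b then (if c then x else y) else y) = if b && c then x else y.
Proof. by case: b; case: c. Qed.

Lemma inord_eq4 (a b c d : bool) :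
  ((inord (2 * a + b) : 'I_4) == inord (2 * c + d)) = (a == c) && (b == d).
Proof.
by rewrite -val_eqE !val_inord4; case: a; case: b; case: c; case: d.
Qed.

Lemma ent_ok (C : numClosedFieldType) k j (E : 'M[C]_4) : (j.+1 < k)%N ->
  (forall x y : 'I_4, E x y = if x == y then E y y else 0) ->
  apply2 (2 * k) (2 * j).+1 E *m encmx C k = encmx C k *m apply2 k j E.
Proof.
move=> Hj Ed; apply/matrixP => r l.
rewrite mul_enc_r mul_enc_l /apply2 mxE [in RHS]mxE Ed [in RHS]Ed.
have h1 : ((2 * j).+1 < 2 * k)%N by lia.
have h2 : ((2 * j).+2 < 2 * k)%N by lia.
have e2 : ((2 * j).+2 = 2 * j.+1)%N by lia.
rewrite (@bit_cw k l _ h1) (@bit_cw k l _ h2) half2S e2 half2 !inord_eq4.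
rewrite !ifif.
congr (if _ then _ else _).
apply/idP/idP.
  case/andP => HF /andP [/eqP H1 /eqP H2].
  have Er : r = cw k l.
    apply: bit_inj => p Hp.
    case: (eqVneq p (2 * j).+1) => [->|n1]; first by rewrite H1 bit_cw // half2S.
    case: (eqVneq p (2 * j.+1)) => [->|n2]; first by rewrite H2 bit_cw ?half2 //; lia.
    have /implyP := forallP HF (Ordinal Hp); rewrite /= n1 n2 => /(_ isT) /eqP //.
  subst r; rewrite iscw_cw dec_cw !eqxx /= andbT.
  by apply/forallP => i; apply/implyP; rewrite eqxx.
case/andP => /andP [Hc HF] /andP [/eqP H1 /eqP H2].
have Er : dec k r = l.
  apply: bit_inj => i Hi.
  case: (eqVneq i j) => [->|n1] //.
  case: (eqVneq i j.+1) => [->|n2] //.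
  by have /implyP := forallP HF (Ordinal Hi); rewrite /= n1 n2 => /(_ isT) /eqP.
have Er2 : r = cw k l by rewrite -Er (@cw_dec k r Hc).
subst r; apply/andP; split.
  by apply/forallP => p; apply/implyP; rewrite eqxx.
by rewrite !bit_cw ?half2 ?half2S ?eqxx //; lia.
Qed.


Definition agr {n} q (r s : 'I_(2 ^ n)) : bool :=
  [forall p : 'I_n, (val p != q) && (val p != q.+1) ==> (bit r p == bit s p)].
Definition idx q (r : nat) : 'I_4 := inord (2 * bit r q + bit r q.+1).

Lemma a2E (C : numClosedFieldType) n q (g : 'M[C]_4) r s :
  apply2 n q g r s = if agr q r s then g (idx q r) (idx q s) else 0.
Proof. by rewrite /apply2 mxE. Qed.

Lemma agr_trans n q (r s c : 'I_(2 ^ n)) : agr q r s -> agr q s c -> agr q r c.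
Proof.
move=> /forallP H1 /forallP H2; apply/forallP => p; apply/implyP => Hp.
by rewrite (eqP (implyP (H1 p) Hp)) (eqP (implyP (H2 p) Hp)).
Qed.

Lemma agr_sym n q (r s : 'I_(2 ^ n)) : agr q r s -> agr q s r.
Proof.
move=> /forallP H1; apply/forallP => p; apply/implyP => Hp.
by rewrite (eqP (implyP (H1 p) Hp)).
Qed.

Lemma t_bits (t : 'I_4) : t = inord (2 * bit t 1 + bit t 0).
Proof.
by case: t => [[|[|[|[|m]]]] Hm] //; apply: val_inj; rewrite /= inordK.
Qed.

Definition st {n} q (c : 'I_(2 ^ n)) (t : 'I_4) : 'I_(2 ^ n) :=
  Ordinal (num_lt n (fun p => if p == q then bit t 1
                              else if p == q.+1 then bit t 0 else bit c p)).

Lemma bit_st n q (c : 'I_(2 ^ n)) t p : (p < n)%N -> bit (st q c t) p =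
  if p == q then bit t 1 else if p == q.+1 then bit t 0 else bit c p.
Proof. by move=> Hp; rewrite /st /= bit_num Hp. Qed.

Lemma agr_st n q (c : 'I_(2 ^ n)) t : agr q (st q c t) c.
Proof.
apply/forallP => -[p Hp]; apply/implyP => /= /andP [Hq1 Hq2].
by rewrite bit_st // (negbTE Hq1) (negbTE Hq2).
Qed.

Lemma idx_st n q (c : 'I_(2 ^ n)) t : (q.+1 < n)%N -> idx q (st q c t) = t.
Proof.
move=> Hq; rewrite /idx !bit_st ?eqxx //; last by lia.
have -> : (q.+1 == q) = false by lia.
by rewrite [RHS]t_bits.
Qed.

Lemma st_uniq n q (c s : 'I_(2 ^ n)) t : (q.+1 < n)%N ->
  idx q s = t -> agr q s c -> s = st q c t.
Proof.
move=> Hq Hs /forallP Ha.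
have : idx q s == inord (2 * bit t 1 + bit t 0) by rewrite -t_bits Hs.
rewrite /idx inord_eq4 => /andP [/eqP h1 /eqP h2].
apply: bit_inj => p Hp; rewrite bit_st //.
case: (eqVneq p q) => [->|Hn1] //.
case: (eqVneq p q.+1) => [->|Hn2] //.
by have /implyP := Ha (Ordinal Hp); rewrite /= Hn1 Hn2 => /(_ isT) /eqP.
Qed.

Arguments agr_trans {n q r s c}.
Arguments agr_sym {n q r s}.
Arguments st_uniq {n q c s t}.
Arguments agr_st {n}.
Arguments idx_st {n q c t}.

Lemma apply2M (C : numClosedFieldType) n q (g1 g2 : 'M[C]_4) : (q.+1 < n)%N ->
  apply2 n q g1 *m apply2 n q g2 = apply2 n q (g1 *m g2).
Proof.
move=> Hq; apply/matrixP => r c; rewrite [in LHS]mxE a2E [in RHS]mxE.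
rewrite (eq_bigr (fun s => (if agr q r s then g1 (idx q r) (idx q s) else 0) *
  (if agr q s c then g2 (idx q s) (idx q c) else 0))); last by move=> s _; rewrite !a2E.
case Hrc: (agr q r c); last first.
  rewrite big1 // => s _.
  case: (boolP (agr q r s)) => Hrs; last by rewrite mul0r.
  case: (boolP (agr q s c)) => Hsc; last by rewrite mulr0.
  by rewrite (agr_trans Hrs Hsc) in Hrc.
rewrite (partition_big (fun s : 'I_(2 ^ n) => idx q s) xpredT) //=.
apply: eq_bigr => t _.
rewrite (bigD1 (st q c t)) /=; last by rewrite idx_st.
rewrite big1 ?addr0 => [|s /andP [/eqP Hs Hne]].
  rewrite agr_st idx_st // (agr_trans Hrc (agr_sym (agr_st q c t))).
  by [].
case: (boolP (agr q s c)) => Hsc; last by rewrite mulr0.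
by rewrite (st_uniq Hq Hs Hsc) eqxx in Hne.
Qed.


Lemma Gmx_mul (C : numClosedFieldType) (A B X Y : 'M[C]_2) :
  Gmx A B *m Gmx X Y = Gmx (A *m X) (B *m Y).
Proof.
have w0 : widen_ord (leqnSn 1) (@ord_max 0) = 0 :> 'I_2 by apply: val_inj.
have w1 : @ord_max 1 = 1 by apply: val_inj.
apply/matrixP => i j; rewrite /Gmx !mxE !big_ord_recr !big_ord0 /=.
case: i => [[|[|[|[|i]]]] Hi]; case: j => [[|[|[|[|j]]]] Hj] //=;
  rewrite ?mxE ?big_ord_recr ?big_ord0 /= ?mxE;
  rewrite ?(mul0r, mulr0, add0r, addr0) ?w0 ?w1 //.
Qed.


Lemma Gmx_ct (C : numClosedFieldType) (A B : 'M[C]_2) :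
  (Gmx A B) ^t* = Gmx (A ^t*) (B ^t*).
Proof.
apply/matrixP => i j; rewrite /Gmx !mxE.
by case: i => [[|[|[|[|i]]]] Hi]; case: j => [[|[|[|[|j]]]] Hj] //=;
  rewrite ?mxE ?rmorph0.
Qed.

Lemma Gmx1 (C : numClosedFieldType) : Gmx (1%:M : 'M[C]_2) 1%:M = 1%:M.
Proof.
apply/matrixP => i j; rewrite /Gmx !mxE.
by case: i => [[|[|[|[|i]]]] Hi]; case: j => [[|[|[|[|j]]]] Hj] //=;
  rewrite ?mxE.
Qed.

Lemma Gmx_unitary (C : numClosedFieldType) (A B : 'M[C]_2) :
  A \is unitarymx -> B \is unitarymx -> Gmx A B \is unitarymx.
Proof.
move=> /unitarymxP HA /unitarymxP HB; apply/unitarymxP.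
by rewrite Gmx_ct Gmx_mul HA HB Gmx1.
Qed.

Lemma det_ct (C : numClosedFieldType) n (A : 'M[C]_n) : \det (A ^t*) = (\det A)^*.
Proof. by rewrite det_map_mx det_tr. Qed.

Lemma det_unit (C : numClosedFieldType) n (A : 'M[C]_n) :
  A \is unitarymx -> \det A * (\det A)^* = 1.
Proof.
move=> /unitarymxP HA; have := congr1 determinant HA.
by rewrite det_mulmx det_ct det1.
Qed.


Definition Dm {C : numClosedFieldType} (d : C) : 'M[C]_2 :=
  diag_mx (\row_(i < 2) (if i == 0 then 1 else d)).

Lemma det_Dm (C : numClosedFieldType) (d : C) : \det (Dm d) = d.
Proof.
by rewrite /Dm det_diag !big_ord_recr big_ord0 /= !mxE /= mul1r mul1r.
Qed.

Lemma Dm_unitary (C : numClosedFieldType) (d : C) : d * d^* = 1 ->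
  Dm d \is unitarymx.
Proof.
move=> Hd; apply/unitarymxP; apply/matrixP => i j.
rewrite !mxE !big_ord_recr big_ord0 /= !mxE.
by case: i => [[|[|i]] Hi]; case: j => [[|[|j]] Hj] //=;
  rewrite ?mxE /= ?(mul0r, mulr0, add0r, addr0, mul1r, mulr1, rmorph0, rmorph1) ?Hd.
Qed.

Lemma E_diag (C : numClosedFieldType) (d : C) (x y : 'I_4) :
  Gmx 1%:M (Dm d) x y = if x == y then Gmx 1%:M (Dm d) y y else 0.
Proof.
rewrite /Gmx !mxE.
by case: x => [[|[|[|[|x]]]] Hx]; case: y => [[|[|[|[|y]]]] Hy] //=;
  rewrite ?mxE.
Qed.

Lemma E_ent (C : numClosedFieldType) (d : C) : d != 1 ->
  entangling (Gmx 1%:M (Dm d)).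
Proof.
move=> Hd; exists (const_mx 1), (const_mx 1) => -[u [v Huv]].
have p1 (j : 'I_4) : product_of (const_mx 1) (const_mx 1) j 0 = 1 :> C.
  by rewrite !mxE mulr1.
have w i : (Gmx 1%:M (Dm d) *m product_of (const_mx 1) (const_mx 1)) i 0 =
           Gmx 1%:M (Dm d) i i.
  rewrite mxE (bigD1 i) //= big1 => [|k Hk]; first by rewrite p1 mulr1 addr0.
  by rewrite E_diag eq_sym (negbTE Hk) mul0r.
have h00 := Huv 0 0; have h01 := Huv 0 1; have h10 := Huv 1 0; have h11 := Huv 1 1.
rewrite !w in h00 h01 h10 h11; move: h00 h01 h10 h11.
rewrite /Gmx !mxE !val_inord4 //= => a b c e.
have : (u 1 0 * v 0 0) * (u 0 0 * v 1 0) = (u 0 0 * v 0 0) * (u 1 0 * v 1 0) by ring.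
rewrite -a -b -c -e !mulr1 => Hd1.
by move: Hd1; rewrite mulr1n => Hd1; rewrite Hd1 eqxx in Hd.
Qed.


Local Open Scope sesquilinear_scope.

Arguments det_unit {C n A}.
Arguments Gmx_unitary {C A B}.
Arguments Dm_unitary {C d}.
Arguments E_ent {C d}.

Lemma unitary1 (C : numClosedFieldType) n : (1%:M : 'M[C]_n) \is unitarymx.
Proof. by apply/unitarymxP; rewrite trmx1 map_mx1 mulmx1. Qed.

Theorem theorem2 (C : numClosedFieldType) (A B : 'M[C]_2) :
  A \is unitarymx -> B \is unitarymx -> \det A != \det B ->
  let M := fun g : 'M[C]_4 => matchgate g \/ g = Gmx A B in
  exists N : nat,
  forall k : nat,
    (* arbitrary single-qubit gates on every logical qubit *)
    (forall (j : nat) (U : 'M[C]_2), (j < k)%N -> U \is unitarymx ->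
       exists c : seq (nat * 'M[C]_4),
         [/\ nn_circuit_in M (2 * k) c, (size c <= N)%N &
             circuit_mx (2 * k) c *m encmx C k = encmx C k *m apply1 k j U])
    /\
    (* an entangling two-qubit gate on every adjacent pair of logical qubits *)
    (forall j : nat, (j.+1 < k)%N ->
       exists E : 'M[C]_4, [/\ E \is unitarymx, entangling E &
       exists c : seq (nat * 'M[C]_4),
         [/\ nn_circuit_in M (2 * k) c, (size c <= N)%N &
             circuit_mx (2 * k) c *m encmx C k = encmx C k *m apply2 k j E]]).
Proof.
move=> HA HB Hdet M.
have Ha : \det A * (\det A)^* = 1 := det_unit HA.
have Hb : \det B * (\det B)^* = 1 := det_unit HB.
set d := \det B * (\det A)^*.
have Hd1 : d != 1.
  apply/eqP => Hd.
  have Eb : \det B = d * \det A by rewrite /d -mulrA [_^* * _]mulrC Ha mulr1.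
  by move: Hdet; rewrite Eb Hd mul1r eqxx.
have Hdu : d * d^* = 1.
  rewrite /d rmorphM /= conjCK.
  have -> : \det B * (\det A)^* * ((\det B)^* * \det A) =
            (\det B * (\det B)^*) * (\det A * (\det A)^*) by ring.
  by rewrite Ha Hb mulr1.
exists 2%N => k; split.
  move=> j U Hj HU; exists [:: (2 * j, Gmx U U)%N]; split => //.
    move=> qg; rewrite inE => /eqP -> /=; split; first by lia.
    by left; exists U, U; split.
  by rewrite /circuit_mx /= mulmx1; apply: single_ok.
move=> j Hj; exists (Gmx 1%:M (Dm d)); split.
- exact: Gmx_unitary (unitary1 _ _) (Dm_unitary Hdu).
- exact: E_ent.
exists [:: ((2 * j).+1, Gmx (A ^t*) (B ^t* *m Dm d)); ((2 * j).+1, Gmx A B)].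
split => //.
  move=> qg; rewrite !inE => /orP [] /eqP -> /=; (split; first by lia).
    left; exists (A ^t*), (B ^t* *m Dm d); split => //.
    - by rewrite trmxC_unitary.
    - by rewrite mul_unitarymx ?trmxC_unitary ?Dm_unitary.
    by rewrite det_mulmx !det_ct det_Dm /d mulrA [_^* * _]mulrC Hb mul1r.
  by right.
rewrite /circuit_mx /= mulmx1 apply2M; last by lia.
rewrite Gmx_mul (unitarymxP HA) mulmxA (unitarymxP HB) mul1mx.
apply: ent_ok => //; exact: E_diag.
Qed.
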